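(* Let $p,q,r\in(0,1)$ with $p+q+r=1$. Let $X_1,\eta_2,\eta_3,\ldots$ be independent random variables, each taking the values $1,-1,0$ with probabilities $p,q,r$ respectively. Set $X_{n+1}=\eta_{n+1}X_1$ for $n\ge1$ and $S_n=\sum_{k=1}^nX_k$. Then, as $n\to\infty$, $S_n/n$ converges in distribution to a random variable taking the value $p-q$ with probability $p$, the value $0$ with probability $r$, and the value $-(p-q)$ with probability $q$. Moreover, $E(S_n/n)\to(p-q)^2$ and $\operatorname{Var}(S_n/n)\to(p-q)^2\big(p+q-(p-q)^2\big)$ as $n\to\infty$.
   Context: This is the elephant random walk with delays in which the elephant remembers only the first step: each later step repeats the first step with probability $p$, reverses it with probability $q$, or equals $0$ with probability $r$. *)

(* Defs.v *)
From HB Require Import structures.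
From mathcomp Require Import all_boot all_order all_algebra.
From mathcomp Require Import all_classical all_reals all_analysis.
Set Implicit Arguments. Unset Strict Implicit. Unset Printing Implicit Defensive.
Import Order.TTheory GRing.Theory Num.Theory.
Import numFieldNormedType.Exports.
Local Open Scope classical_set_scope.
Local Open Scope ring_scope.

Definition mutually_independent {d} {T : measurableType d} {R : realType}
  (P : probability T R) (I : set nat) (Y : nat -> T -> R) : Prop :=
  forall (J : seq nat) (B : nat -> set R),
    uniq J -> {subset J <= I} -> (forall j, measurable (B j)) ->
    P (\bigcap_(j in [set` J]) (Y j @^-1` B j)) =
    (\prod_(j <- J) P (Y j @^-1` B j))%E.

(* Convergence in distribution (weak convergence) of the real random
   variables (Z n) towards a finitely supported law given by a list of
   (atom, mass) pairs: for every bounded continuous f, E[f(Z_n)] tends to the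
   expectation of f under the limit law, \sum mass * f atom. *)
Definition finite_law_expectation {R : realType} (law : seq (R * R))
  (f : R -> R) : R := \sum_(a <- law) a.2 * f a.1.

Definition converges_in_distribution_to_finite_law {d} {T : measurableType d}
  {R : realType} (P : probability T R) (Z : nat -> T -> R)
  (law : seq (R * R)) : Prop :=
  forall f : R -> R, continuous f -> (exists M : R, forall x, `|f x| <= M) ->
    ((fun n => 'E_P[f \o Z n]) @ \oo --> (finite_law_expectation law f)%:E)%E.

Definition erw_X {T : Type} {R : realType} (X1 : T -> R) (eta : nat -> T -> R)
  (n : nat) : T -> R :=
  fun t => if (n <= 1)%N then X1 t else eta n t * X1 t.

Definition erw_S {T : Type} {R : realType} (X1 : T -> R) (eta : nat -> T -> R)
  (n : nat) : T -> R :=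
  fun t => \sum_(1 <= k < n.+1) erw_X X1 eta k t.

(* Main.v *)
Require Import Defs.
From HB Require Import structures.
From mathcomp Require Import all_boot all_order all_algebra.
From mathcomp Require Import all_classical all_reals all_analysis.
From mathcomp Require Import ring lra measurable_realfun zify.
Import Order.TTheory GRing.Theory Num.Theory.
Import numFieldNormedType.Exports.
Local Open Scope classical_set_scope.
Local Open Scope ring_scope.
Set Implicit Arguments. Unset Strict Implicit. Unset Printing Implicit Defensive.
Section toolkit.
Context (R : realType) d (T : measurableType d) (P : probability T R).

Definition bm (F : T -> R) := measurable_fun setT F /\ exists M : R, forall t, `|F t| <= M.

Lemma bm_int F D : measurable D -> bm F -> P.-integrable D (EFin \o F).
Proof.
move=> mD [mF [M hM]].
apply: (@le_integrable _ _ _ P D mD _ (EFin \o cst M)).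
- apply/measurable_EFinP; exact: (measurable_funS measurableT).
- move=> t _ /=; rewrite lee_fin (le_trans (hM t))//; exact: ler_norm.
- exact: finite_measure_integrable_cst.
Qed.

Lemma bm_L1 F : bm F -> F \in Lfun P 1.
Proof. by move=> h; apply/Lfun1_integrable; apply: bm_int. Qed.

Definition Er F := fine ('E_P[F])%E.

Lemma ErE F : bm F -> ('E_P[F] = (Er F)%:E)%E.
Proof. by move=> h; rewrite /Er fineK// expectation_fin_num// bm_L1. Qed.

Lemma bm_cst c : bm (fun _ => c).
Proof. split; first exact: measurable_cst. by exists `|c|. Qed.

Lemma bm_add F G : bm F -> bm G -> bm (fun t => F t + G t).
Proof.
move=> [mF [M hM]] [mG [N hN]]; split; first exact: measurable_funD.
exists (M + N) => t; rewrite (le_trans (ler_normD _ _))//; exact: lerD.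
Qed.

Lemma bm_mul F G : bm F -> bm G -> bm (fun t => F t * G t).
Proof.
move=> [mF [M hM]] [mG [N hN]]; split; first exact: measurable_funM.
exists (M * N) => t; rewrite normrM ler_pM//.
Qed.

Lemma bm_comp (g : R -> R) F M : measurable_fun setT g -> (forall x, `|g x| <= M) ->
  measurable_fun setT F -> bm (fun t => g (F t)).
Proof.
move=> mg hg mF; split; first exact: (measurableT_comp mg mF).
by exists M.
Qed.

Lemma bm_sum (I : Type) (s : seq I) (F : I -> T -> R) : (forall i, bm (F i)) ->
  bm (fun t => \sum_(i <- s) F i t).
Proof.
move=> h; elim: s => [|a s IH].
  by under eq_fun do rewrite big_nil; exact: bm_cst.
under eq_fun do rewrite big_cons; exact: bm_add.
Qed.

Lemma ErD F G : bm F -> bm G -> Er (fun t => F t + G t) = Er F + Er G.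
Proof.
move=> hF hG; rewrite /Er.
have := @expectationD _ _ _ P F G (bm_L1 hF) (bm_L1 hG) => /= ->.
by rewrite fineD// expectation_fin_num// bm_L1.
Qed.

Lemma ErZ k F : bm F -> Er (fun t => k * F t) = k * Er F.
Proof.
move=> hF; rewrite /Er.
rewrite (_ : (fun t => k * F t) = k \o* F); last by apply/funext => t /=; rewrite mulrC.
have := @expectationZl _ _ _ P F k (bm_L1 hF) => /= ->.
by rewrite fineM// expectation_fin_num// bm_L1.
Qed.

Lemma Er_cst c : Er (fun _ => c) = c.
Proof. by rewrite /Er (expectation_cst P c). Qed.

Lemma Er_sum (I : Type) (s : seq I) (F : I -> T -> R) : (forall i, bm (F i)) ->
  Er (fun t => \sum_(i <- s) F i t) = \sum_(i <- s) Er (F i).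
Proof.
move=> h; elim: s => [|a s IH].
  by under eq_fun do rewrite big_nil; rewrite Er_cst big_nil.
under eq_fun do rewrite big_cons; rewrite ErD ?IH ?big_cons//; exact: bm_sum.
Qed.

Lemma Er_ge0 F : (forall t, 0 <= F t) -> 0 <= Er F.
Proof. by move=> h; apply: fine_ge0; apply: expectation_ge0. Qed.

Lemma Er_le F G : bm F -> bm G -> (forall t, F t <= G t) -> Er F <= Er G.
Proof.
move=> hF hG h.
have hGF : bm (fun t => G t - F t).
  apply: bm_add => //.
  have -> : (fun t => - F t) = (fun t => -1 * F t) by apply/funext => t; rewrite mulN1r.
  by apply: bm_mul => //; exact: bm_cst.
have -> : G = (fun t => F t + (G t - F t)) by apply/funext => t; rewrite addrC subrK.
rewrite ErD // lerDl; apply: Er_ge0 => t; rewrite subr_ge0; exact: h.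
Qed.

Lemma bm_opp F : bm F -> bm (fun t => - F t).
Proof.
move=> hF; have -> : (fun t => - F t) = (fun t => -1 * F t) by apply/funext => t; rewrite mulN1r.
by apply: bm_mul => //; exact: bm_cst.
Qed.

Lemma ErB F G : bm F -> bm G -> Er (fun t => F t - G t) = Er F - Er G.
Proof.
move=> hF hG; rewrite ErD //; last exact: bm_opp.
have -> : (fun t => - G t) = (fun t => -1 * G t) by apply/funext => t; rewrite mulN1r.
by rewrite ErZ // mulN1r.
Qed.

End toolkit.

Lemma neq_m1_1 (R : realType) : (-1 : R) <> 1. Proof. move=> h; lra. Qed.
Lemma neq_1_0 (R : realType) : (1 : R) <> 0. Proof. move=> h; lra. Qed.
Lemma neq_m1_0 (R : realType) : (-1 : R) <> 0. Proof. move=> h; lra. Qed.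

Section core.
Context (R : realType) d (T : measurableType d) (P : probability T R).
Variables (p q r : R) (Z : nat -> T -> R).
Hypothesis hpqr : p + q + r = 1.
Hypothesis mZ : forall i, measurable_fun setT (Z i).
Hypothesis vZ : forall i t, Z i t = 1 \/ Z i t = -1 \/ Z i t = 0.
Hypothesis dZ : forall i, (1 <= i)%N -> P [set t | Z i t = 1] = p%:E /\
  P [set t | Z i t = -1] = q%:E /\ P [set t | Z i t = 0] = r%:E.
Hypothesis iZ : mutually_independent P [set n | (1 <= n)%N] Z.

Definition mu (g : R -> R) := p * g 1 + q * g (-1) + r * g 0.

Definition AK (K : seq nat) (B : nat -> set R) := \bigcap_(k in [set` K]) (Z k @^-1` B k).

Lemma AK_nil B : AK [::] B = setT.
Proof. by apply/seteqP; split => t //= _ k. Qed.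

Lemma AK_cons a K B : AK (a :: K) B = (Z a @^-1` B a) `&` AK K B.
Proof.
apply/seteqP; split => t /=.
  move=> h; split; first by apply: h; rewrite /= mem_head.
  by move=> k /= kK; apply: h; rewrite /= inE kK orbT.
move=> [h1 h2] k /=; rewrite inE => /orP[/eqP ->//|kK]; exact: h2.
Qed.

Lemma mpre k (B : set R) : measurable B -> measurable (Z k @^-1` B).
Proof. by move=> mB; rewrite -(setTI (_ @^-1` _)); apply: mZ. Qed.

Lemma mAK K B : (forall k, measurable (B k)) -> measurable (AK K B).
Proof.
move=> mB; elim: K => [|a K IH]; first by rewrite AK_nil.
rewrite AK_cons; apply: measurableI => //; exact: mpre.
Qed.


Lemma bmZ (g : R -> R) i : measurable_fun setT g -> bm (fun t => g (Z i t)).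
Proof.
move=> mg; split; first exact: measurableT_comp.
exists (`|g 1| + `|g (-1)| + `|g 0|) => t.
have h1 := normr_ge0 (g 1); have h2 := normr_ge0 (g (-1)); have h3 := normr_ge0 (g 0).
by case: (vZ i t) => [->|[->|->]]; lra.
Qed.

Lemma bm_prod (I : Type) (s : seq I) (G : I -> T -> R) : (forall i, bm (G i)) ->
  bm (fun t => \prod_(i <- s) G i t).
Proof.
move=> h; elim: s => [|a s IH].
  by under eq_fun do rewrite big_nil; exact: bm_cst.
under eq_fun do rewrite big_cons; exact: bm_mul.
Qed.

Lemma preim1 a (v : R) : Z a @^-1` [set v] = [set t | Z a t = v].
Proof. by []. Qed.

Lemma mprodZ (g : nat -> R -> R) (J : seq nat) D : (forall j, measurable_fun setT (g j)) ->
  measurable_fun D (fun t => (\prod_(j <- J) g j (Z j t))%:E).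
Proof.
move=> mg; apply/measurable_EFinP; apply: (measurable_funS measurableT) => //.
apply: measurable_prod => j _; exact: measurableT_comp.
Qed.

Lemma core_gen (J : seq nat) : uniq J -> all (fun j => (1 <= j)%N) J ->
  forall (g : nat -> R -> R), (forall j, measurable_fun setT (g j)) ->
  forall K B, uniq K -> all (fun k => (1 <= k)%N) K -> all (fun k => k \notin J) K ->
  (forall k, measurable (B k)) ->
  (\int[P]_(t in AK K B) (\prod_(j <- J) g j (Z j t))%:E =
   (\prod_(j <- J) mu (g j) * \prod_(k <- K) fine (P (Z k @^-1` B k)))%:E)%E.
Proof.
elim: J => [|a J IH] uJ pJ g mg K B uK pK nK mB.
  under eq_integral do rewrite big_nil.
  rewrite integral_cst; last exact: mAK.
  rewrite big_nil mul1r mul1e /AK.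
  transitivity (\prod_(k <- K) P (Z k @^-1` B k))%E.
    apply: iZ => //.
    by move=> k kK; move/allP: pK => /(_ k kK) k1; rewrite in_setE.
  - rewrite -prodEFin; apply: eq_bigr => k _; rewrite fineK // fin_num_measure //; exact: mpre.
move: uJ => /= /andP[aJ uJ]; move: pJ => /= /andP[a1 pJ].
have aK : a \notin K.
  by apply/negP => aK; move/allP: nK => /(_ a aK); rewrite inE eqxx.
have nK' : all (fun k => k \notin J) K.
  apply/allP => k kK; move/allP: nK => /(_ k kK); rewrite inE negb_or.
  by case/andP.
pose Bv (v : R) := fun j => if j == a then [set v] else B j.
have mBv v k : measurable (Bv v k) by rewrite /Bv; case: ifP.
have AKv v : AK K (Bv v) = AK K B.
  apply/seteqP; split => t h k kK; have := h k kK; rewrite /Bv;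
    (case: eqP => [ka|//]; subst k; by rewrite /= kK in aK).
pose D v := AK (a :: K) (Bv v).
have DE v : D v = [set t | Z a t = v] `&` AK K B.
  by rewrite /D AK_cons AKv /Bv eqxx.
have mD v : measurable (D v) by apply: mAK.
have hsplit : AK K B = (D 1 `|` D (-1)) `|` D 0.
  rewrite !DE; apply/seteqP; split => t.
    by move=> h; case: (vZ a t) => [e|[e|e]]; [left; left|left; right|right].
  by move=> [[[_ h]|[_ h]]|[_ h]].
have bmF : bm (fun t => \prod_(j <- J) g j (Z j t)).
  by apply: bm_prod => j; apply: bmZ.
have piece v : (\int[P]_(t in D v) (\prod_(j <- a :: J) g j (Z j t))%:E =
   (g a v * (\prod_(j <- J) mu (g j) * \prod_(k <- a :: K) fine (P (Z k @^-1` Bv v k))))%:E)%E.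
  rewrite (eq_integral (fun t => (g a v)%:E * (\prod_(j <- J) g j (Z j t))%:E))%E; last first.
    move=> t; rewrite inE DE => -[/= e _].
    by rewrite big_cons EFinM e.
  rewrite integralZl //; last exact: bm_int.
  rewrite IH ?EFinM //=.
  all: try by rewrite ?aK ?uK ?a1 ?pK.
  by rewrite aJ nK'.
have prodv v : \prod_(k <- a :: K) fine (P (Z k @^-1` Bv v k)) =
    fine (P [set t | Z a t = v]) * \prod_(k <- K) fine (P (Z k @^-1` B k)).
  rewrite big_cons /Bv eqxx; congr (_ * _).
  apply: eq_big_seq => k kK.
  by case: eqP => // ka; subst k; rewrite kK in aK.
have [P1 [P2 P3]] := dZ a1.
have dj1 : [disjoint D 1%R & D (-1)%R].
  rewrite !DE; apply/eqP/seteqP; split => t //= [[e1 _] [e2 _]].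
  by move: e1; rewrite e2 => h; case: (neq_m1_1 h).
have dj2 : [disjoint D 1%R `|` D (-1)%R & D 0%R].
  rewrite !DE; apply/eqP/seteqP; split => t //= [[[e1 _]|[e1 _]] [e2 _]];
    move: e1; rewrite e2 => h.
    by case: (neq_1_0 (esym h)).
  by case: (neq_m1_0 (esym h)).
rewrite hsplit integral_setU //; try exact: mprodZ; try exact: measurableU.
rewrite integral_setU //; try exact: mprodZ.
rewrite !piece !prodv P1 P2 P3 /= -!EFinD; congr EFin.
rewrite big_cons /mu; ring.
Qed.

Lemma core (J : seq nat) (g : nat -> R -> R) : uniq J -> all (fun j => (1 <= j)%N) J ->
  (forall j, measurable_fun setT (g j)) ->
  Er P (fun t => \prod_(j <- J) g j (Z j t)) = \prod_(j <- J) mu (g j).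
Proof.
move=> uJ pJ mg.
have := @core_gen J uJ pJ g mg [::] (fun _ => setT) erefl erefl erefl (fun _ => measurableT).
rewrite AK_nil big_nil mulr1 /Er expectation.unlock => ->//.
Qed.

Lemma mid : measurable_fun setT (fun x : R => x).
Proof. exact: measurable_id. Qed.
Lemma msq : measurable_fun setT (fun x : R => x ^+ 2).
Proof. exact: exprn_measurable. Qed.

Lemma bmZi i : bm (fun t => Z i t).
Proof. exact: (bmZ i mid). Qed.

Lemma mu_id : mu (fun x => x) = p - q.
Proof. rewrite /mu; ring. Qed.
Lemma mu_sq : mu (fun x => x ^+ 2) = p + q.
Proof. rewrite /mu; ring. Qed.

Lemma E1 i : (1 <= i)%N -> Er P (fun t => Z i t) = p - q.
Proof.
move=> i1; rewrite -mu_id -[RHS]mulr1.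
have := @core [:: i] (fun _ x => x) erefl (ltac:(by rewrite /= i1)) (fun _ => mid).
rewrite !big_cons !big_nil /= => <-; congr Er; apply/funext => t.
by rewrite big_cons big_nil mulr1.
Qed.

Lemma E2 i : (1 <= i)%N -> Er P (fun t => Z i t ^+ 2) = p + q.
Proof.
move=> i1; rewrite -mu_sq -[RHS]mulr1.
have := @core [:: i] (fun _ x => x ^+ 2) erefl (ltac:(by rewrite /= i1)) (fun _ => msq).
rewrite !big_cons !big_nil /= => <-; congr Er; apply/funext => t.
by rewrite big_cons big_nil mulr1.
Qed.

Lemma core2 i j (g h : R -> R) : (1 <= i)%N -> (1 <= j)%N -> i != j ->
  measurable_fun setT g -> measurable_fun setT h ->
  Er P (fun t => g (Z i t) * h (Z j t)) = mu g * mu h.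
Proof.
move=> i1 j1 ij mg mh.
pose G := fun m => if m == i then g else h.
have mG : forall m, measurable_fun setT (G m) by move=> m; rewrite /G; case: ifP.
have := @core [:: i; j] G (ltac:(by rewrite /= inE ij)) (ltac:(by rewrite /= i1 j1)) mG.
rewrite !big_cons !big_nil /G eqxx (eq_sym j i) (negbTE ij) /= mulr1 => <-.
congr Er; apply/funext => t.
by rewrite !big_cons big_nil /G eqxx (eq_sym j i) (negbTE ij) /= mulr1.
Qed.

Lemma core3 i j k (g h l : R -> R) : (1 <= i)%N -> (1 <= j)%N -> (1 <= k)%N ->
  i != j -> i != k -> j != k ->
  measurable_fun setT g -> measurable_fun setT h -> measurable_fun setT l ->
  Er P (fun t => g (Z i t) * h (Z j t) * l (Z k t)) = mu g * mu h * mu l.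
Proof.
move=> i1 j1 k1 ij ik jk mg mh ml.
pose G := fun m => if m == i then g else if m == j then h else l.
have mG : forall m, measurable_fun setT (G m).
  by move=> m; rewrite /G; case: ifP => _ //; case: ifP.
have := @core [:: i; j; k] G (ltac:(by rewrite /= !inE negb_or ij ik jk)) (ltac:(by rewrite /= i1 j1 k1)) mG.
rewrite !big_cons !big_nil /G eqxx (eq_sym j i) (negbTE ij) eqxx (eq_sym k i) (negbTE ik)
  (eq_sym k j) (negbTE jk) /= mulr1 mulrA => <-.
congr Er; apply/funext => t.
by rewrite !big_cons big_nil /G eqxx (eq_sym j i) (negbTE ij) eqxx (eq_sym k i) (negbTE ik)
  (eq_sym k j) (negbTE jk) /= mulr1 mulrA.
Qed.

Definition V n t := 1 + \sum_(2 <= k < n.+2) Z k t.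

Lemma bmV n : bm (V n).
Proof. apply: bm_add; first exact: bm_cst. by apply: bm_sum => k; exact: bmZi. Qed.

Lemma bmsq i : bm (fun t => Z i t ^+ 2).
Proof. exact: (bmZ i msq). Qed.

Lemma sum_const2 n (x : R) : \sum_(2 <= k < n.+2) x = n%:R * x.
Proof. by rewrite sumr_const_nat (_ : (n.+2 - 2 = n)%N) ?mulr_natl // subSS subSS subn0. Qed.

Lemma M1 n : Er P (fun t => Z 1 t * V n t) = (p - q) + n%:R * (p - q) ^+ 2.
Proof.
rewrite (_ : (fun t => Z 1 t * V n t) =
   (fun t => Z 1 t + \sum_(2 <= k < n.+2) Z 1 t * Z k t)); last first.
  by apply/funext => t; rewrite /V mulrDr mulr1 mulr_sumr.
rewrite ErD; [|exact: bmZi|by apply: bm_sum => k; apply: bm_mul; exact: bmZi].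
rewrite E1 // Er_sum; last by move=> k; apply: bm_mul; exact: bmZi.
rewrite -sum_const2; congr (_ + _); apply: eq_big_nat => k /andP[k2 _].
rewrite (@core2 1 k (fun x => x) (fun x => x)) ?mu_id ?expr2 //; try exact: mid; lia.
Qed.

Lemma M2a n : Er P (fun t => Z 1 t ^+ 2 * V n t) = (p + q) + n%:R * ((p + q) * (p - q)).
Proof.
rewrite (_ : (fun t => Z 1 t ^+ 2 * V n t) =
   (fun t => Z 1 t ^+ 2 + \sum_(2 <= k < n.+2) Z 1 t ^+ 2 * Z k t)); last first.
  by apply/funext => t; rewrite /V mulrDr mulr1 mulr_sumr.
rewrite ErD; [|exact: bmsq|by apply: bm_sum => k; apply: bm_mul; [exact: bmsq|exact: bmZi]].
rewrite E2 // Er_sum; last by move=> k; apply: bm_mul; [exact: bmsq|exact: bmZi].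
rewrite -sum_const2; congr (_ + _); apply: eq_big_nat => k /andP[k2 _].
rewrite (@core2 1 k (fun x => x ^+ 2) (fun x => x)) ?mu_id ?mu_sq //; try exact: mid; try exact: msq; lia.
Qed.

Lemma Cr n : Er P (fun t => Z 1 t ^+ 2 * Z n.+2 t * V n t) =
  (p + q) * (p - q) + n%:R * ((p + q) * (p - q) ^+ 2).
Proof.
rewrite (_ : (fun t => Z 1 t ^+ 2 * Z n.+2 t * V n t) =
   (fun t => Z 1 t ^+ 2 * Z n.+2 t + \sum_(2 <= k < n.+2) Z 1 t ^+ 2 * Z n.+2 t * Z k t)); last first.
  by apply/funext => t; rewrite /V mulrDr mulr1 mulr_sumr.
have bm2 : bm (fun t => Z 1 t ^+ 2 * Z n.+2 t) by apply: bm_mul; [exact: bmsq|exact: bmZi].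
rewrite ErD; [|exact: bm2|by apply: bm_sum => k; apply: bm_mul; [exact: bm2|exact: bmZi]].
rewrite Er_sum; last by move=> k; apply: bm_mul; [exact: bm2|exact: bmZi].
rewrite (@core2 1 n.+2 (fun x => x ^+ 2) (fun x => x)) ?mu_id ?mu_sq //; try exact: mid; try exact: msq.
rewrite -sum_const2; congr (_ + _); apply: eq_big_nat => k /andP[k2 kn].
rewrite (@core3 1 n.+2 k (fun x => x ^+ 2) (fun x => x) (fun x => x)) ?mu_id ?mu_sq;
  try exact: mid; try exact: msq.
all: try (by rewrite expr2 mulrA); lia.
Qed.

Lemma M2 n : Er P (fun t => Z 1 t ^+ 2 * V n t ^+ 2) =
  (p + q) + 2 * n%:R * ((p + q) * (p - q)) + n%:R * (p + q) ^+ 2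
  + n%:R * (n%:R - 1) * ((p + q) * (p - q) ^+ 2).
Proof.
elim: n => [|n IH].
  rewrite (_ : (fun t => Z 1 t ^+ 2 * V 0 t ^+ 2) = (fun t => Z 1 t ^+ 2)); last first.
    by apply/funext => t; rewrite /V big_geq // addr0 expr1n mulr1.
  rewrite E2 //; ring.
rewrite (_ : (fun t => Z 1 t ^+ 2 * V n.+1 t ^+ 2) = (fun t =>
   Z 1 t ^+ 2 * V n t ^+ 2 + (2 * (Z 1 t ^+ 2 * Z n.+2 t * V n t) + Z 1 t ^+ 2 * Z n.+2 t ^+ 2)));
  last first.
  apply/funext => t; rewrite /V big_nat_recr //=.
  set S := \sum_(2 <= i < n.+2) Z i t; ring.
have bmA : bm (fun t => Z 1 t ^+ 2 * V n t ^+ 2).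
  by apply: bm_mul; [exact: bmsq|rewrite /GRing.exp /=; apply: bm_mul; exact: bmV].
have bmB : bm (fun t => Z 1 t ^+ 2 * Z n.+2 t * V n t).
  by apply: bm_mul; [apply: bm_mul; [exact: bmsq|exact: bmZi]|exact: bmV].
have bmC : bm (fun t => Z 1 t ^+ 2 * Z n.+2 t ^+ 2) by apply: bm_mul; exact: bmsq.
rewrite ErD //; last by apply: bm_add => //; apply: bm_mul => //; exact: bm_cst.
rewrite ErD //; last by apply: bm_mul => //; exact: bm_cst.
rewrite ErZ // IH Cr.
rewrite (@core2 1 n.+2 (fun x => x ^+ 2) (fun x => x ^+ 2)) ?mu_sq //; try exact: msq.
rewrite -[n.+1]addn1 natrD; ring.
Qed.

End core.
Lemma harm_cvg (R : realType) (A B C : R) :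
  (fun n => A + B * harmonic n + C * (harmonic n * harmonic n)) @ \oo --> A.
Proof.
have h := @cvg_harmonic R.
have H := cvgD (cvgD (cvg_cst A) (cvgM (cvg_cst B) h)) (cvgM (cvg_cst C) (cvgM h h)).
rewrite !mulr0 !addr0 in H. exact: H.
Qed.

Lemma cont_delta (R : realType) (f : R -> R) x e : continuous f -> 0 < e ->
  exists2 del, 0 < del & forall y, `|x - y| < del -> `|f x - f y| < e.
Proof.
move=> cf e0.
have := @cvgr_dist_lt _ _ _ _ _ f (f x) (cf x) e e0.
move=> /(_ _) /nbhs_ballP [del del0 H]; exists del => //.
Qed.

Lemma EFin_cvg (R : realType) (u : nat -> R) l : u @ \oo --> l ->
  (fun n => (u n)%:E) @ \oo --> l%:E.
Proof. by move=> h; apply: cvg_EFin => //; exact: nearW. Qed.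

Lemma lin_aux (R : realType) (p q r x : R) : p + q + r = 1 -> p + q + x = 1 -> x = r.
Proof. move=> h1 h2; lra. Qed.

Lemma merwS (R : realType) d (T : measurableType d) (X1 : T -> R) (eta : nat -> T -> R) N :
  measurable_fun setT X1 -> (forall k, (2 <= k)%N -> measurable_fun setT (eta k)) ->
  measurable_fun setT (erw_S X1 eta N).
Proof.
move=> mX me; apply: measurable_sum => k; rewrite /erw_X.
case h : (k <= 1)%N => //=.
apply: measurable_funM => //; apply: me; by rewrite ltnNge h.
Qed.

Lemma erwSE (R : realType) (T : Type) (X1 : T -> R) (eta : nat -> T -> R) n t :
  erw_S X1 eta n.+1 t = X1 t * (1 + \sum_(2 <= k < n.+2) eta k t).
Proof.
rewrite /erw_S big_ltn // {1}/erw_X /= mulrDr mulr1 mulr_sumr; congr (_ + _).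
apply: eq_big_nat => k /andP[k2 _]; rewrite /erw_X.
by rewrite leqNgt k2 /= mulrC.
Qed.

Lemma ptw (R : realType) (f : R -> R) M e del y x : 0 < e -> 0 < del -> (forall x, `|f x| <= M) ->
  (forall x, `|y - x| < del -> `|f y - f x| < e) ->
  `|f y - f x| <= e + 2 * M / del ^+ 2 * (x - y) ^+ 2.
Proof.
move=> e0 d0 fb H.
have M0 : 0 <= M := le_trans (normr_ge0 _) (fb 0).
have K0 : 0 <= 2 * M / del ^+ 2 * (x - y) ^+ 2.
  by apply: mulr_ge0; [apply: divr_ge0; [apply: mulr_ge0|apply: exprn_ge0; exact: ltW]|exact: sqr_ge0].
have [hlt|hge] := ltP `|y - x| del.
  by apply: (le_trans (ltW (H x hlt))); rewrite lerDl.
have sq : del ^+ 2 <= (x - y) ^+ 2.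
  have -> : (x - y) ^+ 2 = `|y - x| ^+ 2 by rewrite real_normK ?num_real // -opprB sqrrN.
  have := normr_ge0 (y - x); move: hge; set a := `|y - x|; move=> hge a0; nra.
have h2 : 2 * M <= 2 * M / del ^+ 2 * (x - y) ^+ 2.
  rewrite -subr_ge0 (_ : 2 * M / del ^+ 2 * (x - y) ^+ 2 - 2 * M =
     2 * M / del ^+ 2 * ((x - y) ^+ 2 - del ^+ 2)); last first.
    by field; rewrite gt_eqF.
  apply: mulr_ge0; last by rewrite subr_ge0.
  by apply: divr_ge0; [apply: mulr_ge0|apply: exprn_ge0; exact: ltW].
have h1 := ler_normB (f y) (f x).
have hy := fb y; have hx := fb x.
move: h1 hy hx h2 K0; set u := 2 * M / del ^+ 2 * (x - y) ^+ 2.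
move=> h1 hy hx h2 K0; lra.
Qed.

Section clean.
Context (R : realType) d (T : measurableType d) (P : probability T R) (p q r : R).
Variables (X1 : T -> R) (eta : nat -> T -> R).
Hypothesis hpqr : p + q + r = 1.
Hypothesis mX1 : measurable_fun setT X1.
Hypothesis meta : forall n, (2 <= n)%N -> measurable_fun setT (eta n).
Hypothesis dX1 : P [set t | X1 t = 1] = p%:E /\ P [set t | X1 t = -1] = q%:E /\
         P [set t | X1 t = 0] = r%:E.
Hypothesis deta : forall n, (2 <= n)%N ->
         P [set t | eta n t = 1] = p%:E /\ P [set t | eta n t = -1] = q%:E /\
         P [set t | eta n t = 0] = r%:E.
Hypothesis indep : mutually_independent P [set n | (1 <= n)%N]
             (fun n => if n == 1%N then X1 else eta n).

Definition Y n := if n == 1%N then X1 else eta n.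
Definition rho (x : R) : R := (x == 1)%:R - (x == -1)%:R.
Definition Zc n t := if (1 <= n)%N then rho (Y n t) else 0.

Lemma rho_meas : measurable_fun setT rho.
Proof.
rewrite (_ : rho = \1_[set 1] \- \1_[set -1]).
  apply: measurable_funB; apply: measurable_indic; exact: measurable_set1.
by apply/funext => x /=; rewrite /rho !indicE !in_set1.
Qed.

Lemma mY n : (1 <= n)%N -> measurable_fun setT (Y n).
Proof.
rewrite /Y; case: eqP => [_ _|/eqP n1 n0]; first exact: mX1.
by apply: meta; rewrite ltn_neqAle eq_sym n1 n0.
Qed.

Lemma mZc n : measurable_fun setT (Zc n).
Proof.
rewrite /Zc; case h : (1 <= n)%N => /=.
  by apply: measurableT_comp; [exact: rho_meas|exact: mY].
exact: measurable_cst.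
Qed.

Lemma rho1 y : (rho y = 1) <-> (y = 1).
Proof.
rewrite /rho; split; last by move=> ->; rewrite eqxx (_ : (1 == -1) = false) ?subr0//; apply/eqP => h; exact: (neq_m1_1 (esym h)).
have [->//|h1] := eqVneq y 1; have [h2|h2] := eqVneq y (-1); rewrite /=.
  by rewrite sub0r => /eqP; rewrite eqr_oppLR => /eqP h; exfalso; exact: (neq_m1_1 (esym h)).
by rewrite subrr => h; exfalso; exact: (neq_1_0 (esym h)).
Qed.

Lemma rhom1 y : (rho y = -1) <-> (y = -1).
Proof.
rewrite /rho; split; last first.
  by move=> ->; rewrite eqxx (_ : (-1 == 1) = false) ?sub0r//; apply/eqP; exact: neq_m1_1.
have [h1|h1] := eqVneq y 1; have [->//|h2] := eqVneq y (-1); rewrite /=.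
  by rewrite subr0 => h; exfalso; exact: (neq_m1_1 (esym h)).
by rewrite subrr => /eqP; rewrite eq_sym oppr_eq0 => /eqP h; exfalso; exact: (neq_1_0 h).
Qed.

Lemma rho0 : rho (0 : R) = 0.
Proof.
have h1 : ((0:R) == 1) = false by apply/eqP => e; exact: (neq_1_0 (esym e)).
have h2 : ((0:R) == -1) = false by apply/eqP => e; exact: (neq_m1_0 (esym e)).
rewrite /rho h1 h2; exact: subrr.
Qed.

Lemma vZc n t : Zc n t = 1 \/ Zc n t = -1 \/ Zc n t = 0.
Proof.
rewrite /Zc; case: ifP => _; last by right; right.
rewrite /rho; have [h1|h1] := eqVneq (Y n t) 1; have [h2|h2] := eqVneq (Y n t) (-1); rewrite /=.
- by right; right; rewrite subrr.
- by left; rewrite subr0.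
- by right; left; rewrite sub0r.
- by right; right; rewrite subrr.
Qed.

Lemma dY i : (1 <= i)%N -> P [set t | Y i t = 1] = p%:E /\
  P [set t | Y i t = -1] = q%:E /\ P [set t | Y i t = 0] = r%:E.
Proof.
rewrite /Y; case: eqP => [_ _|/eqP n1 n0]; first exact: dX1.
by apply: deta; rewrite ltn_neqAle eq_sym n1 n0.
Qed.

Lemma mset (f : T -> R) v : measurable_fun setT f -> measurable [set t | f t = v].
Proof. by move=> mf; have := mf measurableT [set v] (measurable_set1 v); rewrite setTI. Qed.

Lemma PU (A B : set T) : measurable A -> measurable B -> A `&` B = set0 ->
  P (A `|` B) = (P A + P B)%E.
Proof. move=> mA mB AB; exact: measureU. Qed.

Lemma PC0 (A : set T) : measurable A -> P A = 1%E -> P (~` A) = 0%E.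
Proof. by move=> mA h; rewrite probability_setC // h subee. Qed.

Lemma dZc i : (1 <= i)%N -> P [set t | Zc i t = 1] = p%:E /\
  P [set t | Zc i t = -1] = q%:E /\ P [set t | Zc i t = 0] = r%:E.
Proof.
move=> i1; have [P1 [P2 _]] := dY i1.
have E1 : [set t | Zc i t = 1] = [set t | Y i t = 1].
  by apply/seteqP; split => t /=; rewrite /Zc i1 rho1.
have E2 : [set t | Zc i t = -1] = [set t | Y i t = -1].
  by apply/seteqP; split => t /=; rewrite /Zc i1 rhom1.
rewrite E1 E2; do 2 split => //.
have mA v : measurable [set t | Zc i t = v] by apply: mset; exact: mZc.
have dj1 : [set t | Zc i t = 1] `&` [set t | Zc i t = -1] = set0.
  by apply/seteqP; split => t //= [-> h]; exact: (neq_m1_1 (esym h)).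
have dj2 : ([set t | Zc i t = 1] `|` [set t | Zc i t = -1]) `&` [set t | Zc i t = 0] = set0.
  apply/seteqP; split => t //= [[->|->] h]; [exact: (neq_1_0 h)|exact: (neq_m1_0 h)].
have hT : setT = ([set t | Zc i t = 1] `|` [set t | Zc i t = -1]) `|` [set t | Zc i t = 0].
  by apply/seteqP; split => t // _; case: (vZc i t) => [h|[h|h]]; [left; left|left; right|right].
have := probability_setT P; rewrite hT PU //; last exact: measurableU.
have P1' : P [set t | Zc i t = 1] = p%:E by rewrite E1; exact: P1.
have P2' : P [set t | Zc i t = -1] = q%:E by rewrite E2; exact: P2.
rewrite PU // P1' P2'.
have := fin_num_measure P _ (mA 0) => /fineK <-.
rewrite -!EFinD => -[h]; congr EFin.
exact: lin_aux hpqr h.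
Qed.

Lemma iZc : mutually_independent P [set n | (1 <= n)%N] Zc.
Proof.
move=> J B uJ sJ mB.
have eqpre : forall j, j \in J -> Zc j @^-1` B j = Y j @^-1` (rho @^-1` B j).
  move=> j jJ; have := sJ j jJ; rewrite in_setE /= => j1.
  by apply/seteqP; split => t /=; rewrite /Zc j1.
have mB' j : measurable (rho @^-1` B j).
  by rewrite -[X in measurable X]setTI; apply: rho_meas.
transitivity (P (\bigcap_(j in [set` J]) (Y j @^-1` (rho @^-1` B j)))).
  congr (P _); apply/seteqP; split => t /= h j jJ; have := h j jJ; by rewrite eqpre.
rewrite (indep uJ sJ mB'); apply: eq_big_seq => j jJ; by rewrite eqpre.
Qed.

Lemma ae_G : {ae P, forall t, forall k, (1 <= k)%N -> Y k t = Zc k t}.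
Proof.
pose Nk k := [set t | (1 <= k)%N /\ Y k t <> Zc k t].
apply: (@negligibleS _ _ _ P (\bigcup_k Nk k)).
  move=> t /= nG; apply: contrapT => nU; apply: nG => k k1.
  have [//|ne] := eqVneq (Y k t) (Zc k t).
  by exfalso; apply: nU; exists k => //; split => //; apply/eqP.
apply: negligible_bigcup => k.
case k1 : (1 <= k)%N; last first.
  exists set0; split; [exact: measurable0|exact: measure0|].
  by move=> t /= []; rewrite k1.
have [P1 [P2 P3]] := dY k1.
have mA v : measurable [set t | Y k t = v] by apply: mset; exact: mY.
pose A := ([set t | Y k t = 1] `|` [set t | Y k t = -1]) `|` [set t | Y k t = 0].
exists (~` A); split.
- by apply: measurableC; apply: measurableU; [apply: measurableU|].
- have mAA : measurable A by apply: measurableU; [apply: measurableU|].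
  have hA : P A = 1%E.
    rewrite /A PU //; last 2 first.
    + exact: measurableU.
    + by apply/seteqP; split => t //= [[->|->] h]; [exact: (neq_1_0 h)|exact: (neq_m1_0 h)].
    rewrite PU //; last first.
      by apply/seteqP; split => t //= [-> h]; exact: (neq_m1_1 (esym h)).
    by rewrite P1 P2 P3 -!EFinD hpqr.
  exact: (PC0 mAA hA).
- move=> t /= [_ ne] hA. apply: ne.  rewrite /Zc k1 /=.  case: hA => [[h|h]|h].  all: rewrite h.  + exact: (esym (proj2 (rho1 1) erefl)).
  + exact: (esym (proj2 (rhom1 (-1)) erefl)).
  + exact: (esym rho0).
Qed.

Lemma mZc1 : measurable_fun setT (Zc 1). Proof. exact: mZc. Qed.

Lemma transfer (F : R -> R) N : measurable_fun setT F ->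
  ('E_P[fun t => F (erw_S X1 eta N t)] = 'E_P[fun t => F (erw_S (Zc 1) Zc N t)])%E.
Proof.
move=> mF; rewrite expectation.unlock.
apply: ae_eq_integral => //.
1,2: apply/measurable_EFinP; apply: measurableT_comp => //; apply: merwS;
  [first [exact: mX1 | exact: mZc] | move=> k k2; first [exact: (meta k2) | exact: mZc]].
apply: filterS ae_G => t hG _; congr EFin; congr F.
apply: eq_big_nat => k /andP[k1 _]; rewrite /erw_X.
have e1 : X1 t = Zc 1 t by rewrite -hG.
case: ifP => hk; first by [].
have k1' : k != 1%N by apply/eqP => e; rewrite e in hk.
by rewrite e1 -(hG k) // /Y (negbTE k1').
Qed.

Lemma cmu : forall i, (1 <= i)%N -> P [set t | Zc i t = 1] = p%:E /\
  P [set t | Zc i t = -1] = q%:E /\ P [set t | Zc i t = 0] = r%:E.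
Proof. exact: dZc. Qed.

Lemma cM1 n : Er P (fun t => Zc 1 t * V Zc n t) = (p - q) + n%:R * (p - q) ^+ 2.
Proof. apply: M1 => //; [exact: mZc|exact: vZc|exact: cmu|exact: iZc]. Qed.

Lemma cM2a n : Er P (fun t => Zc 1 t ^+ 2 * V Zc n t) = (p + q) + n%:R * ((p + q) * (p - q)).
Proof. apply: M2a => //; [exact: mZc|exact: vZc|exact: cmu|exact: iZc]. Qed.

Lemma cM2 n : Er P (fun t => Zc 1 t ^+ 2 * V Zc n t ^+ 2) =
  (p + q) + 2 * n%:R * ((p + q) * (p - q)) + n%:R * (p + q) ^+ 2
  + n%:R * (n%:R - 1) * ((p + q) * (p - q) ^+ 2).
Proof. apply: M2 => //; [exact: mZc|exact: vZc|exact: cmu|exact: iZc]. Qed.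

Lemma cE2 : Er P (fun t => Zc 1 t ^+ 2) = p + q.
Proof. apply: E2 => //; [exact: mZc|exact: vZc|exact: cmu|exact: iZc]. Qed.

Lemma cEg (g : R -> R) : measurable_fun setT g -> Er P (fun t => g (Zc 1 t)) = mu p q r g.
Proof.
move=> mg; rewrite -[RHS]mulr1.
have := @core _ _ _ P p q r Zc mZc vZc cmu iZc [:: 1%N] (fun _ => g) erefl erefl (fun _ => mg).
rewrite !big_cons !big_nil /= => <-; congr Er; apply/funext => t.
by rewrite big_cons big_nil mulr1.
Qed.

Lemma cbZ i : bm (fun t => Zc i t).
Proof. apply: bmZi; [exact: mZc|exact: vZc]. Qed.
Lemma cbV n : bm (V Zc n).
Proof. apply: bmV; [exact: mZc|exact: vZc]. Qed.

Lemma transfer2 (F : R -> R) N (G1 G2 : T -> R) : measurable_fun setT F ->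
  (forall t, G1 t = F (erw_S X1 eta N t)) -> (forall t, G2 t = F (erw_S (Zc 1) Zc N t)) ->
  ('E_P[G1] = 'E_P[G2])%E.
Proof.
move=> mF h1 h2.
have -> : G1 = fun t => F (erw_S X1 eta N t) by apply/funext.
have -> : G2 = fun t => F (erw_S (Zc 1) Zc N t) by apply/funext.
exact: transfer.
Qed.

Lemma mdivc (c : R) : measurable_fun setT (fun x : R => x / c).
Proof. apply: measurable_funM; [exact: measurable_id|exact: measurable_cst]. Qed.

Lemma hE n : ('E_P[(fun t => erw_S X1 eta n.+1 t / n.+1%:R)%R] =
  ((p - q) ^+ 2 + ((p - q) - (p - q) ^+ 2) * harmonic n + 0 * (harmonic n * harmonic n))%:E)%E.
Proof.
rewrite (@transfer2 (fun x => x / n.+1%:R) n.+1 _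
   (fun t => n.+1%:R^-1 * (Zc 1 t * V Zc n t))) //; last 2 first.
- exact: mdivc.
- by move=> t; rewrite erwSE mulrC.
rewrite ErE; last by apply: bm_mul; [exact: bm_cst|apply: bm_mul; [exact: cbZ|exact: cbV]].
rewrite ErZ; last by apply: bm_mul; [exact: cbZ|exact: cbV].
rewrite cM1; congr EFin; rewrite /harmonic /=.
have hn : n%:R = n.+1%:R - 1 :> R by rewrite -natr1 addrK.
have c0 : n.+1%:R != 0 :> R by rewrite pnatr_eq0.
rewrite hn; field; by rewrite addrC natr1 pnatr_eq0.
Qed.

Lemma hVar n : ('V_P[(fun t => erw_S X1 eta n.+1 t / n.+1%:R)%R] =
  ((p - q) ^+ 2 * (p + q - (p - q) ^+ 2)
   + (2 * (p + q) * (p - q) + (p + q) ^+ 2 - 3 * (p + q) * (p - q) ^+ 2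
      - 2 * (p - q) ^+ 2 * ((p - q) - (p - q) ^+ 2)) * harmonic n
   + ((p + q) - 2 * (p + q) * (p - q) - (p + q) ^+ 2 + 2 * (p + q) * (p - q) ^+ 2
      - ((p - q) - (p - q) ^+ 2) ^+ 2) * (harmonic n * harmonic n))%:E)%E.
Proof.
rewrite /variance covariance.unlock hE.
set m := fine _.
pose h := harmonic n : R.
have mF : measurable_fun setT (fun x : R => (x / n.+1%:R - m) * (x / n.+1%:R - m)).
  by apply: measurable_funM; apply: measurable_funB; [exact: mdivc|exact: measurable_cst|
    exact: mdivc|exact: measurable_cst].
rewrite (@transfer2 (fun x => (x / n.+1%:R - m) * (x / n.+1%:R - m)) n.+1 _
   (fun t => (h * h) * (Zc 1 t ^+ 2 * V Zc n t ^+ 2) + ((-2 * m * h) * (Zc 1 t * V Zc n t) + m ^+ 2))) //;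
  last by move=> t; rewrite erwSE /V /h /harmonic /=; ring.
have b1 : bm (fun t => Zc 1 t ^+ 2 * V Zc n t ^+ 2).
  apply: bm_mul; first by apply: bm_mul; exact: cbZ.
  by apply: bm_mul; exact: cbV.
have b2 : bm (fun t => Zc 1 t * V Zc n t) by apply: bm_mul; [exact: cbZ|exact: cbV].
have bA : bm (fun t => (h * h) * (Zc 1 t ^+ 2 * V Zc n t ^+ 2)) by apply: bm_mul => //; exact: bm_cst.
have bB : bm (fun t => (-2 * m * h) * (Zc 1 t * V Zc n t)) by apply: bm_mul => //; exact: bm_cst.
have bC : bm (fun _ : T => m ^+ 2) by exact: bm_cst.
have bBC : bm (fun t => (-2 * m * h) * (Zc 1 t * V Zc n t) + m ^+ 2) by exact: bm_add.
rewrite ErE; last exact: bm_add.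
rewrite ErD // ErD //.
rewrite (ErZ _ (h * h) b1) (ErZ _ (-2 * m * h) b2) Er_cst cM2 cM1 /m /h /harmonic /=; congr EFin.
have hn : n%:R = n.+1%:R - 1 :> R by rewrite -natr1 addrK.
rewrite hn; field; by rewrite addrC natr1 pnatr_eq0.
Qed.

Lemma hDist (f : R -> R) M : continuous f -> (forall x, `|f x| <= M) ->
  (fun n => 'E_P[f \o (fun t => erw_S X1 eta n.+1 t / n.+1%:R)%R])%E @ \oo -->
  ((p * f (p - q) + q * f (- (p - q)) + r * f 0)%:E)%E.
Proof.
move=> cf fb.
have mf := continuous_measurable_fun cf.
have M0 : 0 <= M := le_trans (normr_ge0 _) (fb 0).
pose S n t := Zc 1 t * V Zc n t / n.+1%:R.
have bS n : bm (S n).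
  by apply: bm_mul; [apply: bm_mul; [exact: cbZ|exact: cbV]|exact: bm_cst].
have bfS n : bm (fun t => f (S n t)) by apply: (bm_comp mf fb); exact: (bS n).1.
pose a n := Er P (fun t => f (S n t)).
have Ea n : ('E_P[f \o (fun t => erw_S X1 eta n.+1 t / n.+1%:R)%R] = (a n)%:E)%E.
  rewrite (@transfer2 (fun x => f (x / n.+1%:R)) n.+1 _ (fun t => f (S n t))) //.
  - exact: ErE.
  - exact: measurableT_comp mf (mdivc _).
  - by move=> t; rewrite erwSE.
rewrite (_ : (fun n => _) = (fun n => (a n)%:E)); last by apply/funext => n; rewrite Ea.
apply: EFin_cvg.
have mfd : measurable_fun setT (fun x => f ((p - q) * x)).
  apply: measurableT_comp => //.
  try (apply: measurable_funM; [exact: measurable_cst|exact: measurable_id]).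
have bL : bm (fun t => f ((p - q) * Zc 1 t)).
  by apply: (bm_comp mfd (fun x => fb _)); exact: mZc.
have HL : Er P (fun t => f ((p - q) * Zc 1 t)) = p * f (p - q) + q * f (- (p - q)) + r * f 0.
  by rewrite (cEg mfd) /mu mulr1 mulrN1 mulr0.
rewrite -HL.
apply/cvgrPdist_le => eps eps0.
have e0 : 0 < eps / 2 by rewrite divr_gt0.
have [d1 d10 H1] := cont_delta (p - q) cf e0.
have [d2 d20 H2] := cont_delta (- (p - q)) cf e0.
have [d3 d30 H3] := cont_delta 0 cf e0.
pose del := Num.min d1 (Num.min d2 d3).
have del0 : 0 < del by rewrite /del !lt_min d10 d20 d30.
pose K := 2 * M / del ^+ 2.
have Hpt t x : `|f ((p - q) * Zc 1 t) - f x| <= eps / 2 + K * (x - (p - q) * Zc 1 t) ^+ 2.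
  rewrite /K; apply: (@ptw _ f M (eps / 2) del _ x e0 del0 fb) => y hy.
  move: hy; case: (vZc 1 t) => [->|[->|->]]; rewrite ?mulr1 ?mulrN1 ?mulr0 => hy.
  - by apply: H1; apply: (lt_le_trans hy); rewrite /del ge_min lexx.
  - by apply: H2; apply: (lt_le_trans hy); rewrite /del !ge_min lexx orbT.
  - by apply: H3; apply: (lt_le_trans hy); rewrite /del !ge_min lexx !orbT.
pose h n := harmonic n : R.
pose en n := Er P (fun t => (S n t - (p - q) * Zc 1 t) ^+ 2).
have b1 n : bm (fun t => Zc 1 t ^+ 2 * V Zc n t ^+ 2).
  apply: bm_mul; first by apply: bm_mul; exact: cbZ.
  by apply: bm_mul; exact: cbV.
have b2 n : bm (fun t => Zc 1 t ^+ 2 * V Zc n t).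
  by apply: bm_mul; [apply: bm_mul; exact: cbZ|exact: cbV].
have b3 : bm (fun t => Zc 1 t ^+ 2) by apply: bm_mul; exact: cbZ.
have Een n : en n = 0 + ((p + q) ^+ 2 - (p + q) * (p - q) ^+ 2) * h n
    + ((p + q) - 2 * (p + q) * (p - q) - (p + q) ^+ 2 + 2 * (p + q) * (p - q) ^+ 2) * (h n * h n).
  rewrite /en (_ : (fun t => (S n t - (p - q) * Zc 1 t) ^+ 2) = fun t =>
     (h n * h n) * (Zc 1 t ^+ 2 * V Zc n t ^+ 2) + ((-2 * (p - q) * h n) * (Zc 1 t ^+ 2 * V Zc n t)
       + (p - q) ^+ 2 * Zc 1 t ^+ 2)); last first.
    by apply/funext => t; rewrite /S /h /harmonic /=; ring.
  rewrite ErD; [|by apply: bm_mul; [exact: bm_cst|exact: b1]|].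
    rewrite ErD; [|by apply: bm_mul; [exact: bm_cst|exact: b2]|by apply: bm_mul; [exact: bm_cst|exact: b3]].
    rewrite (ErZ _ _ (b1 n)) (ErZ _ _ (b2 n)) (ErZ _ _ b3) cM2 cM2a cE2 /h /harmonic /=.
    have hn : n%:R = n.+1%:R - 1 :> R by rewrite -natr1 addrK.
    rewrite hn; field; by rewrite addrC natr1 pnatr_eq0.
  by apply: bm_add; apply: bm_mul; (exact: bm_cst || exact: b2 || exact: b3).
have Hk : \forall n \near \oo, `|0 - K * en n| <= eps / 2.
  have cv : (fun n => K * en n) @ \oo --> 0.
    rewrite (_ : (fun n => K * en n) = fun n => 0 + K * ((p + q) ^+ 2 - (p + q) * (p - q) ^+ 2) * harmonic n
      + K * ((p + q) - 2 * (p + q) * (p - q) - (p + q) ^+ 2 + 2 * (p + q) * (p - q) ^+ 2)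
          * (harmonic n * harmonic n)); first exact: harm_cvg.
    by apply/funext => n; rewrite Een /h; ring.
  by move/cvgrPdist_le : cv => /(_ _ e0).
apply: filterS Hk => n hn.
have bD n' : bm (fun t => (S n' t - (p - q) * Zc 1 t) ^+ 2).
  apply: bm_mul; apply: bm_add; (exact: bS || (apply: bm_opp; apply: bm_mul; [exact: bm_cst|exact: cbZ])).
have bG : bm (fun t => eps / 2 + K * (S n t - (p - q) * Zc 1 t) ^+ 2).
  by apply: bm_add; [exact: bm_cst|apply: bm_mul; [exact: bm_cst|exact: bD]].
have EG : Er P (fun t => eps / 2 + K * (S n t - (p - q) * Zc 1 t) ^+ 2) = eps / 2 + K * en n.
  by rewrite ErD //; [rewrite Er_cst ErZ|exact: bm_cst|apply: bm_mul; [exact: bm_cst|exact: bD]].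
have up : a n - Er P (fun t => f ((p - q) * Zc 1 t)) <= eps / 2 + K * en n.
  rewrite /a -ErB // -EG; apply: Er_le => //; first by apply: bm_add => //; exact: bm_opp.
  move=> t; apply: (le_trans (ler_norm _)); rewrite distrC; exact: Hpt.
have lo : Er P (fun t => f ((p - q) * Zc 1 t)) - a n <= eps / 2 + K * en n.
  rewrite /a -ErB // -EG; apply: Er_le => //; first by apply: bm_add => //; exact: bm_opp.
  move=> t; apply: (le_trans (ler_norm _)); exact: Hpt.
have hn' : K * en n <= eps / 2.
  by apply: le_trans hn; rewrite sub0r normrN ler_norm.
move: up lo hn'; set L := Er P _; set A := a n; set B := K * en n => up lo hn'.
rewrite ler_norml; apply/andP; split; lra.
Qed.

End clean.

Unset Implicit Arguments.

Theorem theorem5p2 (R : realType) (d : measure_display) (T : measurableType d)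
  (P : probability T R) (p q r : R)
  (hp : 0 < p < 1) (hq : 0 < q < 1) (hr : 0 < r < 1) (hpqr : p + q + r = 1)
  (X1 : T -> R) (eta : nat -> T -> R)
  (mX1 : measurable_fun setT X1)
  (meta : forall n, (2 <= n)%N -> measurable_fun setT (eta n))
  (dX1 : P [set t | X1 t = 1] = p%:E /\ P [set t | X1 t = -1] = q%:E /\
         P [set t | X1 t = 0] = r%:E)
  (deta : forall n, (2 <= n)%N ->
         P [set t | eta n t = 1] = p%:E /\ P [set t | eta n t = -1] = q%:E /\
         P [set t | eta n t = 0] = r%:E)
  (indep : mutually_independent P [set n | (1 <= n)%N]
             (fun n => if n == 1%N then X1 else eta n)) :
  let Sn := fun n : nat => fun t => erw_S X1 eta n t / n%:R in
  converges_in_distribution_to_finite_law P Sn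
    [:: (p - q, p); (0, r); (- (p - q), q)] /\
  ((fun n => 'E_P[Sn n]) @ \oo --> ((p - q) ^+ 2)%:E)%E /\
  ((fun n => 'V_P[Sn n]) @ \oo --> ((p - q) ^+ 2 * (p + q - (p - q) ^+ 2))%:E)%E.
Proof.
move=> Sn; split; [|split].
- move=> f cf [M fb].
  rewrite -cvg_shiftS /finite_law_expectation !big_cons big_nil /=.
  rewrite (_ : p * f (p - q) + (r * f 0 + (q * f (- (p - q)) + 0)) =
     p * f (p - q) + q * f (- (p - q)) + r * f 0); last by ring.
  by apply: (hDist hpqr mX1 meta dX1 deta indep cf fb).
- rewrite -cvg_shiftS.
  rewrite (_ : [sequence _]_n = fun n => ((p - q) ^+ 2 + ((p - q) - (p - q) ^+ 2) * harmonic n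
      + 0 * (harmonic n * harmonic n))%:E); last first.
    by apply/funext => n; apply: (hE hpqr mX1 meta dX1 deta indep n).
  by apply: EFin_cvg; exact: harm_cvg.
- rewrite -cvg_shiftS.
  rewrite (eq_cvg _ _ (fun n => hVar hpqr mX1 meta dX1 deta indep n)).
  by apply: EFin_cvg; exact: harm_cvg.
Qed.
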